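(* For the power network system described in the context, there exist a constant switching vector $\sigma^*\in\{0,1\}^{|\tilde{\mathcal L}|}$, an equilibrium of the system with $\sigma=\sigma^*$ (whose power command entries all equal a common value $p^{c,*}$), and $\zeta\in\mathbb R$ such that $p^{c,*}-\beta/K\le\zeta\le p^{c,*}$ and, for every $(l,j)\in\tilde{\mathcal L}$: $\sigma^*_{l,j}\in\{0\}$ if $\zeta>c_{l,j}/\overline d_{l,j}$; $\sigma^*_{l,j}\in\{0,\rho_{l,j}\}$ if $\zeta=c_{l,j}/\overline d_{l,j}$; $\sigma^*_{l,j}\in\{\rho_{l,j}\}$ if $|\zeta|<c_{l,j}/\overline d_{l,j}$; $\sigma^*_{l,j}\in\{\rho_{l,j},1\}$ if $\zeta=-c_{l,j}/\overline d_{l,j}$; $\sigma^*_{l,j}\in\{1\}$ if $\zeta<-c_{l,j}/\overline d_{l,j}$.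
   Context: Let $(\mathcal N,\mathcal E)$ be a connected directed graph (power network), bus set $\mathcal N=\{1,\dots,|\mathcal N|\}$, arbitrarily oriented ($(i,j)\in\mathcal E\Rightarrow(j,i)\notin\mathcal E$), $\mathcal N^p_j=\{k:(k,j)\in\mathcal E\}$, $\mathcal N^s_j=\{k:(j,k)\in\mathcal E\}$; $(\mathcal N,\tilde{\mathcal E})$ a connected directed graph (communication network). For $j\in\mathcal N$, $\mathcal L_j$ is a finite set of on-off loads, $\tilde{\mathcal L}=\{(l,j):l\in\mathcal L_j,j\in\mathcal N\}$; load $(l,j)$ has magnitude $\overline d_{l,j}>0$, state $\sigma_{l,j}\in\{0,1\}$, desired state $\rho_{l,j}\in\{0,1\}$ and cost constant $c_{l,j}$. $\beta=\max_{(l,j)\in\tilde{\mathcal L}}\overline d_{l,j}$. Constants $M_j,\gamma_j,\kappa_j,A_j,\tau_j>0$, $p^L_j\in\mathbb R$, $B_{ij}>0$, $\tau_{ij}>0$; $K=\sum_j\kappa_j$. Dynamics in state $(\eta,\omega,p^M,p^c,\psi)$: $\dot\eta_{ij}=\omega_i-\omega_j$, $(i,j)\in\mathcal E$; $M_j\dot\omega_j=p^M_j-p^L_j-A_j\omega_j-\sum_{l\in\mathcal L_j}\overline d_{l,j}\sigma_{l,j}-\sum_{k\in\mathcal N^s_j}B_{jk}\eta_{jk}+\sum_{i\in\mathcal N^p_j}B_{ij}\eta_{ij}$; $\gamma_j\dot p^M_j=-(p^M_j+\kappa_j\omega_j-\kappa_jp^c_j)$; $\tau_{ij}\dot\psi_{ij}=p^c_i-p^c_j$,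 $(i,j)\in\tilde{\mathcal E}$; $\tau_j\dot p^c_j=-p^M_j+p^L_j+\sum_{l\in\mathcal L_j}\overline d_{l,j}\sigma_{l,j}-\sum_{k:(j,k)\in\tilde{\mathcal E}}\psi_{jk}+\sum_{i:(i,j)\in\tilde{\mathcal E}}\psi_{ij}$. An equilibrium for fixed $\sigma$ is a state where all derivatives vanish; at any equilibrium all entries of $p^c$ coincide. *)

(* Defs.v *)
From HB Require Import structures.
From mathcomp Require Import all_boot all_order all_algebra.
Set Implicit Arguments. Unset Strict Implicit. Unset Printing Implicit Defensive.
Import Order.TTheory GRing.Theory Num.Theory.
Local Open Scope ring_scope.

Definition connected_digraph (n : nat) (E : rel 'I_n) : Prop :=
  forall i j : 'I_n, connect (fun x y => E x y || E y x) i j.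

Definition oriented (n : nat) (E : rel 'I_n) : Prop :=
  forall i j : 'I_n, E i j -> ~~ E j i.

Section Dynamics.
Variables (R : realFieldType) (n : nat) (L : finType).
(* Power network E, communication network Et; loads L located at bus [bus l],
   so that L_j = [set l | bus l == j] and (l, j) in tilde L iff bus l = j. *)
Variables (E Et : rel 'I_n) (bus : L -> 'I_n).
Variables (dbar : L -> R).
Variables (M gamma kappa A tau pL : 'I_n -> R).
Variables (B tauE : 'I_n -> 'I_n -> R).

Definition load_sum (sigma : L -> bool) (j : 'I_n) : R :=
  \sum_(l : L | bus l == j) dbar l * (sigma l)%:R.

(* Right-hand sides of the dynamics (time derivatives of the state
   (eta, omega, pM, pc, psi)); eta is indexed by edges of E and psi by
   edges of Et (values off the edges are irrelevant). *)
Definition d_eta (omega : 'I_n -> R) (i j : 'I_n) : R := omega i - omega j.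

Definition d_omega (sigma : L -> bool) (eta : 'I_n -> 'I_n -> R)
  (omega pM : 'I_n -> R) (j : 'I_n) : R :=
  (pM j - pL j - A j * omega j - load_sum sigma j
   - \sum_(k | E j k) B j k * eta j k
   + \sum_(i | E i j) B i j * eta i j) / M j.

Definition d_pM (omega pM pc : 'I_n -> R) (j : 'I_n) : R :=
  - (pM j + kappa j * omega j - kappa j * pc j) / gamma j.

Definition d_psi (pc : 'I_n -> R) (i j : 'I_n) : R := (pc i - pc j) / tauE i j.

Definition d_pc (sigma : L -> bool) (pM pc : 'I_n -> R)
  (psi : 'I_n -> 'I_n -> R) (j : 'I_n) : R :=
  (- pM j + pL j + load_sum sigma j
   - \sum_(k | Et j k) psi j k + \sum_(i | Et i j) psi i j) / tau j.

Definition equilibrium (sigma : L -> bool) (eta : 'I_n -> 'I_n -> R)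
  (omega pM pc : 'I_n -> R) (psi : 'I_n -> 'I_n -> R) : Prop :=
  [/\ forall i j, E i j -> d_eta omega i j = 0,
      forall j, d_omega sigma eta omega pM j = 0,
      forall j, d_pM omega pM pc j = 0,
      forall i j, Et i j -> d_psi pc i j = 0 &
      forall j, d_pc sigma pM pc psi j = 0].

End Dynamics.

(* beta = max over loads of dbar (all dbar > 0, so the 0 seed is harmless). *)
Definition beta_max (R : realFieldType) (L : finType) (dbar : L -> R) : R :=
  \big[Num.max/0]_(l : L) dbar l.

(* Main.v *)
Require Import Defs.
From HB Require Import structures.
From mathcomp Require Import all_boot all_order all_algebra.
From mathcomp Require Import ring lra.
Set Implicit Arguments. Unset Strict Implicit. Unset Printing Implicit Defensive.
Import Order.TTheory GRing.Theory Num.Theory.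
Local Open Scope ring_scope.

Section Flow.
Variables (R : realFieldType) (n : nat) (E : rel 'I_n).

Definition divf (f : 'I_n -> 'I_n -> R) j :=
  \sum_(k | E j k) f j k - \sum_(i | E i j) f i j.

Lemma sum_ind (T : finType) (P : pred T) z :
  \sum_(k | P k) ((k == z)%:R : R) = (P z)%:R.
Proof.
case Pz: (P z).
  rewrite (bigD1 z) //= eqxx big1 ?addr0 // => k /andP[_ /negbTE ->] //.
by apply: big1 => k Pk; case: eqP => // Ekz; rewrite -Ekz Pk in Pz.
Qed.

Definition Pf u v := exists f, forall j, divf f j = (j == u)%:R - (j == v)%:R.

Lemma Pf_refl u : Pf u u.
Proof. by exists (fun _ _ => 0); move=> j; rewrite /divf !big1 // !subrr. Qed.

Lemma Pf_trans u v w : Pf u v -> Pf v w -> Pf u w.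
Proof.
move=> [f Hf] [g Hg]; exists (fun a b => f a b + g a b); move=> j.
have := Hf j; have := Hg j; rewrite /divf !big_split /= => H1 H2.
rewrite (_ : forall x y z t : R, x + y - (z + t) = (x - z) + (y - t)); last by move=> *; ring.
rewrite H1 H2; ring.
Qed.

Lemma Pf_sym u v : Pf u v -> Pf v u.
Proof.
move=> [f Hf]; exists (fun a b => - f a b); move=> j.
have := Hf j; rewrite /divf !sumrN => H.
rewrite (_ : forall x y : R, - x - - y = - (x - y)); last by move=> *; ring.
rewrite H; ring.
Qed.

Lemma Pf_edge x z : E x z -> Pf x z.
Proof.
move=> Exz; exists (fun a b => (a == x)%:R * (b == z)%:R); move=> j.
rewrite /divf -mulr_sumr sum_ind.
under eq_bigr do rewrite mulrC.
rewrite -mulr_sumr sum_ind.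
case: (eqVneq j x) => [->|Hx]; case: (eqVneq x z) => [<-|Hz] //=; rewrite ?eqxx ?Exz.
- by rewrite !mul1r !subrr.
- by rewrite mul0r mul1r.
- by rewrite (negbTE Hx) !mul0r.
- by case: eqP => [->|]; rewrite ?Exz ?mul0r ?mulr0 ?mul1r.
Qed.

Lemma Pf_connect u v : connect (fun x y => E x y || E y x) u v -> Pf u v.
Proof.
move/connectP=> [p Hp ->]; elim: p u Hp => [|y p IH] u /=; first by move=> _; exact: Pf_refl.
move=> /andP[/orP[H|H] Hp]; apply: (@Pf_trans _ y); [exact: Pf_edge| exact: IH
  | apply: Pf_sym; exact: Pf_edge | exact: IH].
Qed.

Lemma flow_seq (v0 : 'I_n) (b : 'I_n -> R) : connected_digraph E -> forall s : seq 'I_n,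
  exists f, forall j, divf f j = \sum_(u <- s) b u * ((j == u)%:R - (j == v0)%:R).
Proof.
move=> HC; elim=> [|u s [f Hf]].
  by exists (fun _ _ => 0); move=> j; rewrite /divf big_nil !big1 // subrr.
have [g Hg] := Pf_connect (HC u v0).
exists (fun a c => b u * g a c + f a c); move=> j.
rewrite big_cons -(Hf j) -(Hg j) /divf !big_split /= -!mulr_sumr; ring.
Qed.

Lemma flow_exists (v0 : 'I_n) : connected_digraph E -> forall b : 'I_n -> R,
  \sum_j b j = 0 -> exists f, forall j, divf f j = b j.
Proof.
move=> HC b Hb; have [f Hf] := flow_seq v0 b HC (index_enum _).
exists f => j; rewrite Hf.
under eq_bigr do rewrite mulrBr.
rewrite big_split /= sumrN -mulr_suml Hb mul0r subr0.
rewrite (bigD1 j) //= eqxx mulr1 big1 ?addr0 // => u /negbTE.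
by rewrite eq_sym => ->; rewrite mulr0.
Qed.
End Flow.
Section Select.
Variables (R : realFieldType) (L : finType) (t dbar : L -> R) (P0 K beta : R).
Hypotheses (HK : 0 < K) (Hb0 : 0 <= beta) (Hdb : forall l, dbar l <= beta).

Definition gS (S : {set L}) := (P0 + \sum_(l in S) dbar l) / K.

Definition concl := exists S : {set L}, exists zeta : R,
  [/\ forall l, l \notin S -> t l <= zeta,
      forall l, l \in S -> zeta <= t l &
      gS S - beta / K <= zeta <= gS S].

Lemma finish (S : {set L}) : (forall l, l \notin S -> t l <= gS S) ->
  ~~ [exists l in S, t l < gS S] -> concl.
Proof.
move=> H2 /exists_inPn Hno; exists S, (gS S); split => //.
- by move=> l lS; rewrite leNgt Hno.
- rewrite lexx andbT lerBlDr lerDl; apply: divr_ge0 => //; exact: ltW.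
Qed.

Lemma select_aux m : forall S : {set L}, (#|S| <= m)%N ->
  (forall l l', l \notin S -> l' \in S -> t l <= t l') ->
  (forall l, l \notin S -> t l <= gS S) -> concl.
Proof.
elim: m => [|m IH] S HS H1 H2;
  case: (boolP [exists l in S, t l < gS S]) => [/exists_inP [l0 l0S lt0] | Hno];
  try exact: (finish H2 Hno).
  have : (0 < #|S|)%N by apply/card_gt0P; exists l0.
  by rewrite leqNgt in HS; rewrite (negbTE HS).
case: (@arg_minP _ R _ l0 (fun i => i \in S) t l0S) => ls lsS lsmin.
set S' := S :\ ls.
have gSE : gS S = gS S' + dbar ls / K.
  by rewrite /gS (big_setD1 ls lsS) /=; ring.
have dK : dbar ls / K <= beta / K by rewrite ler_pM2r ?invr_gt0.
have tl0 := lsmin l0 l0S.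
case: (lerP (t ls) (gS S')) => Hc.
  apply: (IH S').
  - by move: HS; rewrite (cardsD1 ls S) lsS.
  - move=> l l'; rewrite !in_setD1 negb_and negbK => /orP[/eqP->|lS] /andP[_ l'S].
      exact: lsmin.
    exact: H1.
  - move=> l; rewrite in_setD1 negb_and negbK => /orP[/eqP->//|lS].
    exact: le_trans (H1 l ls lS lsS) Hc.
exists S, (t ls); split.
- by move=> l lS; exact: H1.
- exact: lsmin.
- apply/andP; split; lra.
Qed.

End Select.
Theorem lemma2 (R : realFieldType) (n : nat) (L : finType)
  (E Et : rel 'I_n) (bus : L -> 'I_n)
  (dbar c : L -> R) (rho : L -> bool)
  (M gamma kappa A tau pL : 'I_n -> R) (B tauE : 'I_n -> 'I_n -> R) :
  (0 < n)%N ->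
  connected_digraph E -> oriented E -> connected_digraph Et ->
  (forall l, 0 < dbar l) ->
  (forall l, 0 < c l) ->
  (forall j, 0 < M j) -> (forall j, 0 < gamma j) -> (forall j, 0 < kappa j) ->
  (forall j, 0 < A j) -> (forall j, 0 < tau j) ->
  (forall i j, E i j -> 0 < B i j) -> (forall i j, Et i j -> 0 < tauE i j) ->
  let K := \sum_(j < n) kappa j in
  let beta := beta_max dbar in
  exists (sigma : L -> bool) (eta : 'I_n -> 'I_n -> R) (omega pM pc : 'I_n -> R)
         (psi : 'I_n -> 'I_n -> R) (pcs zeta : R),
    [/\ equilibrium E Et bus dbar M gamma kappa A tau pL B tauE
          sigma eta omega pM pc psi,
        forall j, pc j = pcs,
        pcs - beta / K <= zeta <= pcs &
        forall l : L,
          [/\ zeta > c l / dbar l -> sigma l = false,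
              zeta = c l / dbar l -> sigma l = false \/ sigma l = rho l,
              `|zeta| < c l / dbar l -> sigma l = rho l,
              zeta = - (c l / dbar l) -> sigma l = rho l \/ sigma l = true &
              zeta < - (c l / dbar l) -> sigma l = true]].
Proof.
move=> n0 HCE _ HCEt Hd Hc HM Hg Hk HA Ht HB HtE K beta.
pose v0 : 'I_n := Ordinal n0.
have HK : 0 < K.
  rewrite /K (bigD1 v0) //=; have h1 := Hk v0.
  have h2 : 0 <= \sum_(j | j != v0) kappa j by apply: sumr_ge0 => j _; exact: ltW.
  lra.
have Hb0 : 0 <= beta by exact: bigmax_ge_id.
have Hdb : forall l, dbar l <= beta by move=> l; exact: le_bigmax.
pose t l := if rho l then c l / dbar l else - (c l / dbar l).
pose P0 := \sum_(j < n) pL j.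
have [S [zeta [Hout Hin Hbd]]] := @select_aux R L t dbar P0 K beta HK Hb0 Hdb
  #|[set: L]| [set: L] (leqnn _) (fun l l' h _ => False_ind _ (negP h (in_setT l)))
  (fun l h => False_ind _ (negP h (in_setT l))).
pose sigma := fun l => l \in S.
have Hload : \sum_(j < n) load_sum bus dbar sigma j = \sum_(l in S) dbar l.
  transitivity (\sum_l dbar l * (sigma l)%:R).
    rewrite /load_sum [RHS](partition_big bus predT) //=.
  rewrite [RHS]big_mkcond /=.
  by apply: eq_bigr => l _; rewrite /sigma; case: (l \in S); rewrite ?mulr1 ?mulr0.
pose pcs := gS dbar P0 K S.
pose pM := fun j => kappa j * pcs.
pose b1 := fun j => pM j - pL j - load_sum bus dbar sigma j.
have Hs1 : \sum_j b1 j = 0.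
  rewrite /b1 !big_split /= !sumrN Hload -mulr_suml -/K /pM /pcs /gS -/P0.
  rewrite mulrCA divff ?mulr1 ?gt_eqF //; ring.
have Hs2 : \sum_j (- b1 j) = 0 by rewrite sumrN Hs1 oppr0.
have [f1 Hf1] := flow_exists v0 HCE Hs1.
have [f2 Hf2] := flow_exists v0 HCEt Hs2.
pose eta := fun i j => f1 i j / B i j.
exists sigma, eta, (fun _ => 0), pM, (fun _ => pcs), f2, pcs, zeta; split => //.
- split.
  + by move=> i j _; rewrite /d_eta subrr.
  + move=> j; rewrite /d_omega.
    have -> : \sum_(k | E j k) B j k * eta j k = \sum_(k | E j k) f1 j k.
      by apply: eq_bigr => k Ejk; rewrite /eta mulrC divfK // gt_eqF // HB.
    have -> : \sum_(i | E i j) B i j * eta i j = \sum_(i | E i j) f1 i j.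
      by apply: eq_bigr => k Ejk; rewrite /eta mulrC divfK // gt_eqF // HB.
    have := Hf1 j; rewrite /divf /b1 mulr0 => H.
    apply/eqP; rewrite mulf_eq0; apply/orP; left; apply/eqP; lra.
  + move=> j; rewrite /d_pM /pM mulr0 addr0 subrr oppr0; exact: mul0r.
  + by move=> i j _; rewrite /d_psi subrr mul0r.
  + move=> j; rewrite /d_pc.
    have := Hf2 j; rewrite /divf /b1 => H.
    apply/eqP; rewrite mulf_eq0; apply/orP; left; apply/eqP; lra.
- move=> l; have hr : 0 < c l / dbar l by apply: divr_gt0.
  move: (Hout l) (Hin l); rewrite /sigma /t.
  case: (l \in S); case: (rho l) => /= Ho Hi;
    [have Hz := Hi isT | have Hz := Hi isT | have Hz := Ho isT | have Hz := Ho isT];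
    split=> H; rewrite ?ltr_norml in H; try (case/andP: H => H H');
    try (by left); try (by right); try done; exfalso; lra.
Qed.
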